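(* Let $k\ge 1$ be an integer, let $C(k)=\prod_{p\le 2k,\ p\text{ prime}}p$, and let $a\in\mathbb{C}$ with $a\neq 0$. Define $$Z_a^k=\Big\{(\zeta_1,\dots,\zeta_k)\ :\ \zeta_i \text{ roots of unity, and } \exists\, a_1,\dots,a_k\in\mathbb{Q} \text{ with } \sum_{i=1}^k a_i\zeta_i=a \text{ and } \sum_{i\in I}a_i\zeta_i\neq 0 \text{ for all } \emptyset\neq I\subseteq[k]\Big\}.$$ Then $|Z_a^k|\le (k\cdot C(k))^k$.
   Context: $[k]=\{1,\dots,k\}$. *)

(* Defs.v *)
From mathcomp Require Import all_boot all_order all_algebra.
Set Implicit Arguments. Unset Strict Implicit. Unset Printing Implicit Defensive.
Import Order.TTheory GRing.Theory Num.Theory.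
Local Open Scope ring_scope.

Definition is_root_of_unity {C : numClosedFieldType} (z : C) : Prop :=
  exists n : nat, (0 < n)%N /\ z ^+ n = 1.

Definition Cconst (k : nat) : nat := (\prod_(p < (2 * k).+1 | prime p) p)%N.

Definition inZ {C : numClosedFieldType} (k : nat) (a : C) (z : k.-tuple C) : Prop :=
  (forall i : 'I_k, is_root_of_unity (tnth z i)) /\
  exists c : 'I_k -> rat,
    \sum_(i < k) ratr (c i) * tnth z i = a /\
    forall I : {set 'I_k}, I != set0 -> \sum_(i in I) ratr (c i) * tnth z i != 0.

(* Main.v *)
Require Import Defs.
From mathcomp Require Import all_boot all_order all_algebra.
Import Order.TTheory GRing.Theory Num.Theory.
Local Open Scope ring_scope.
From mathcomp Require Import all_field all_solvable zify ring lra.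
Set Implicit Arguments. Unset Strict Implicit. Unset Printing Implicit Defensive.
Import Order.TTheory GRing.Theory Num.Theory.

Lemma prim_root_exists (C : numClosedFieldType) n : (n > 0)%N -> exists z : C, n.-primitive_root z.
Proof.
pose p : {poly C} := 'X^n - 1; have [r Dp] := closed_field_poly_normal p.
move=> n_gt0; rewrite (monicP _) ?monicXnsubC // scale1r in Dp.
have rn1: all n.-unity_root r by apply/allP=> z; rewrite -root_prod_XsubC -Dp.
have sz_r: (n < (size r).+1)%N.
  by rewrite -(size_prod_XsubC r id) -Dp size_XnsubC.
have [|z] := hasP (has_prim_root n_gt0 rn1 _ sz_r); last by exists z.
by rewrite -separable_prod_XsubC -Dp separable_Xn_sub_1 // pnatr_eq0 -lt0n.
Qed.

Lemma cyclo_map (F : fieldType) n (z : F) :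
  n.-primitive_root z -> map_poly intr 'Phi_n = cyclotomic z n.
Proof.
elim/ltn_ind: n z => n IHn z prim_z.
have n_gt0 := prim_order_gt0 prim_z.
have [uDn _ inDn] := divisors_correct n_gt0.
pose q := \prod_(d <- rem n (divisors n)) 'Phi_d.
have mon_q: q \is monic by apply: monic_prod => d _; apply: Cyclotomic_monic.
have nz_q: map_poly (intr : int -> F) q != 0.
  by apply: monic_neq0; apply: monic_map.
have e1: cyclotomic z n * map_poly intr q = 'X^n - 1.
  rewrite (prod_cyclotomic prim_z) (big_rem n) ?inDn //=.
  rewrite divnn n_gt0 expr1 rmorph_prod /=; congr (_ * _).
  apply: eq_big_seq => d; rewrite mem_rem_uniq ?inE //= inDn => /andP[n'd ddvn].
  by rewrite -IHn ?dvdn_prim_root // ltn_neqAle n'd dvdn_leq.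
have e2: map_poly intr 'Phi_n * map_poly (intr : int -> F) q = 'X^n - 1.
  rewrite -rmorphM /=.
  have ->: 'Phi_n * q = 'X^n - 1 by rewrite -(prod_Cyclotomic n_gt0) (big_rem n) ?inDn.
  by rewrite rmorphB /= rmorph1 map_polyXn.
by apply: (mulIf nz_q); rewrite e1 e2.
Qed.

Lemma map_PhiQ (F : numFieldType) n :
  map_poly (ratr : rat -> F) (map_poly intr 'Phi_n) = map_poly intr 'Phi_n.
Proof.
by rewrite -map_poly_comp; apply: eq_map_poly => b; rewrite /= rmorph_int.
Qed.

Lemma Phi_dvd (C : numClosedFieldType) n (rho : C) (P : {poly rat}) :
  n.-primitive_root rho -> root (map_poly ratr P) rho ->
  (map_poly intr 'Phi_n %| P)%R.
Proof.
move=> prim_rho Prho.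
set PhiQ : {poly rat} := map_poly intr 'Phi_n.
have n_gt0 := prim_order_gt0 prim_rho.
have PhiQ_nz : PhiQ != 0.
  by apply: monic_neq0; apply: monic_map; apply: Cyclotomic_monic.
set g := gcdp P PhiQ.
have g_nz : g != 0 by rewrite gcdp_eq0 negb_and PhiQ_nz orbT.
have gC : root (map_poly (ratr : rat -> C) g) rho.
  rewrite gcdp_map root_gcd Prho /= map_PhiQ (cyclo_map prim_rho).
  by rewrite root_cyclotomic.
have sg : (1 < size g)%N.
  rewrite -(size_map_poly (ratr : {rmorphism rat -> C})).
  apply: root_size_gt1 gC.
  by rewrite map_poly_eq0.
have [z prim_z] := C_prim_root_exists n_gt0.
have [w gw] : exists w, root (map_poly (ratr : rat -> algC) g) w.
  apply/closed_rootP; rewrite size_map_poly.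
  by rewrite neq_ltn sg orbT.
have prim_w : n.-primitive_root w.
  rewrite -(root_cyclotomic prim_z) -(cyclo_map prim_z) -map_PhiQ.
  apply: root_dvdp gw; rewrite dvdp_map; exact: dvdp_gcdr.
have [p0 [Dp0 _] Hp0] := minCpolyP w.
have ep : p0 = PhiQ.
  apply: (map_inj_poly (fmorph_inj (ratr : {rmorphism rat -> algC}))).
    exact: rmorph0.
  rewrite -Dp0.
  by rewrite (minCpoly_cyclotomic prim_w) map_PhiQ (cyclo_map prim_w).
rewrite -ep -Hp0; apply: root_dvdp gw; rewrite dvdp_map; exact: dvdp_gcdl.
Qed.

Lemma galois_root (C : numClosedFieldType) n (rho : C) (P : {poly rat}) t :
  n.-primitive_root rho -> coprime t n -> root (map_poly ratr P) rho ->
  root (map_poly ratr P) (rho ^+ t).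
Proof.
move=> prim_rho co Prho.
have := Phi_dvd prim_rho Prho; rewrite -(dvdp_map (ratr : {rmorphism rat -> C})).
move=> /root_dvdp; apply; rewrite map_PhiQ (cyclo_map prim_rho) root_cyclotomic //.
by rewrite prim_root_exp_coprime.
Qed.

Lemma galois_sum (C : numClosedFieldType) (I : finType) (A : {set I})
  (c : I -> rat) (w : I -> C) N t :
  (0 < N)%N -> (forall i, i \in A -> w i ^+ N = 1) -> coprime t N ->
  \sum_(i in A) ratr (c i) * w i = 0 -> \sum_(i in A) ratr (c i) * w i ^+ t = 0.
Proof.
move=> N_gt0 wN co S0.
have [rho prim] := prim_root_exists C N_gt0.
pose s := mkseq (fun j => rho ^+ j) N.
pose e i := index (w i) s.
have we i : i \in A -> w i = rho ^+ e i.
  move=> iA; have [j Dj] := prim_rootP prim (wN i iA).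
  have ws : w i \in s.
    by rewrite Dj; apply/mapP; exists (val j); rewrite ?mem_iota //= add0n.
  have := nth_index 0 ws; rewrite nth_mkseq => [->//|].
  by rewrite -[X in (_ < X)%N](size_mkseq (fun j => rho ^+ j) N) index_mem.
pose P : {poly rat} := \sum_(i in A) (c i)%:P * 'X^(e i).
have evP x : (map_poly (ratr : rat -> C) P).[x] = \sum_(i in A) ratr (c i) * x ^+ e i.
  rewrite rmorph_sum horner_sum; apply: eq_bigr => i _.
  by rewrite rmorphM /= map_polyC map_polyXn hornerCM hornerXn.
have R1 : root (map_poly (ratr : rat -> C) P) rho.
  rewrite /root evP; apply/eqP; rewrite -[RHS]S0; apply: eq_bigr => i iA; by rewrite -we.
have := galois_root prim co R1; rewrite /root evP => /eqP H; rewrite -[RHS]H.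
by apply: eq_bigr => i iA; rewrite we // -!exprM mulnC.
Qed.

Lemma geom_root (C : numClosedFieldType) (p : nat) (x : C) :
  x ^+ p = 1 -> \sum_(r < p) x ^+ r = if x == 1 then p%:R else 0.
Proof.
move=> xp; case: eqP => [->|/eqP x1].
  by rewrite (eq_bigr (fun _ => 1)) ?sumr_const ?card_ord // => r _; rewrite expr1n.
have : (x - 1) * \sum_(r < p) x ^+ r = 0.
  by rewrite -subrX1 xp subrr.
by move/eqP; rewrite mulf_eq0 subr_eq0 (negbTE x1) /= => /eqP.
Qed.

Section Mann.
Variables (C : numClosedFieldType) (I : finType) (c : I -> rat) (w : I -> C).

Definition S (B : {set I}) := \sum_(i in B) ratr (c i) * w i.
Definition minimal (A : {set I}) :=
  S A = 0 /\ forall B : {set I}, B \subset A -> B != set0 -> S B = 0 -> B = A :> {set I}.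

Lemma key_all (A : {set I}) p N' j0 :
  minimal A -> j0 \in A -> w j0 = 1 -> (0 < p)%N ->
  (forall i, i \in A -> w i ^+ (p * N') = 1) ->
  (forall r, (r < p)%N -> \sum_(i in A) ratr (c i) * (w i * (w i ^+ N') ^+ r) = 0) ->
  forall i, i \in A -> w i ^+ N' = 1.
Proof.
move=> [SA minA] j0A wj0 p_gt0 wN E0.
pose B := [set i in A | w i ^+ N' == 1].
have BA : B = A.
  apply: minA; first by apply/subsetP => i; rewrite inE => /andP[].
    by apply/set0Pn; exists j0; rewrite inE j0A wj0 expr1n eqxx.
  have : \sum_(r < p) \sum_(i in A) ratr (c i) * (w i * (w i ^+ N') ^+ r) = p%:R * S B.
    rewrite exchange_big /= /S mulr_sumr [RHS]big_mkcond [LHS]big_mkcond /=; apply: eq_bigr => i _.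
    rewrite inE; case: ifP => iA /=; last by [].
    rewrite -mulr_sumr -mulr_sumr geom_root; last by rewrite -exprM mulnC wN.
    case: ifP => _. ring. by rewrite !mulr0.
  rewrite big1 => [|r _]; last exact: E0.
  move/esym/eqP; rewrite mulf_eq0 pnatr_eq0 -[(p == 0)%N]negbK -lt0n p_gt0 /= => /eqP //.
by move=> i; rewrite -BA inE => /andP[_ /eqP].
Qed.


Lemma uniq_bad p N' r s : prime p -> coprime p N' ->
  ~~ coprime (1 + N' * r) p -> ~~ coprime (1 + N' * s) p -> (r < p)%N -> (s < p)%N -> r = s.
Proof.
move=> pp co; rewrite !(coprime_sym _ p) !prime_coprime // !negbK.
wlog rs : r s / (r <= s)%N.
  move=> H dr ds rp sp; case/orP: (leq_total r s) => h; first exact: H.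
  by apply/esym/H.
move=> dr ds rp sp.
have := dvdn_sub ds dr; rewrite subnDl -mulnBr Gauss_dvdr //.
case: (posnP (s - r)) => [|h1 h2]; first by lia.
by have := gtnNdvd h1 (leq_ltn_trans (leq_subr _ _) sp); rewrite h2.
Qed.

Lemma reduce (A : {set I}) p N' j0 :
  minimal A -> j0 \in A -> w j0 = 1 -> prime p -> (0 < N')%N ->
  (forall i, i \in A -> w i ^+ (p * N') = 1) ->
  (p %| N' \/ #|A| < p)%N ->
  forall i, i \in A -> w i ^+ N' = 1.
Proof.
move=> minA j0A wj0 pp N'_gt0 wN hyp.
have p_gt0 := prime_gt0 pp.
apply: (key_all minA j0A wj0 p_gt0 wN).
pose E r := \sum_(i in A) ratr (c i) * (w i * (w i ^+ N') ^+ r).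
have Egal r : coprime (1 + N' * r) p -> E r = 0.
  move=> co; rewrite /E.
  have -> : \sum_(i in A) ratr (c i) * (w i * (w i ^+ N') ^+ r) =
     \sum_(i in A) ratr (c i) * w i ^+ (1 + N' * r).
    by apply: eq_bigr => i _; rewrite exprD expr1 exprM.
  apply: (galois_sum _ wN); first by rewrite muln_gt0 p_gt0.
    rewrite coprimeMr co /= coprime_sym /coprime addnC mulnC gcdnMDl.
    by rewrite gcdn1.
  by case: minA.
case: (boolP (p %| N')%N) => [dN'|ndN'].
  move=> r _; apply: Egal.
  apply: coprime_dvdr dN' _.
  by rewrite coprime_sym /coprime addnC mulnC gcdnMDl gcdn1.
case: hyp => [/(negP ndN')//|cardA].
have coN : coprime p N' by rewrite prime_coprime.
have [om prim_om] := prim_root_exists C p_gt0.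
have [v vp vA] : exists2 v, v ^+ p = 1 & forall i, i \in A -> w i ^+ N' != v.
  case: (boolP [exists j : 'I_p, [forall i in A, w i ^+ N' != om ^+ j]]).
    move=> /existsP[j /forall_inP Hj]; exists (om ^+ j) => //.
    by rewrite exprAC (prim_expr_order prim_om) expr1n.
  rewrite negb_exists => /forallP Hall.
  have Hj (j : 'I_p) : exists i, (i \in A) && (w i ^+ N' == om ^+ j).
    move: (Hall j); rewrite negb_forall => /existsP[i].
    by rewrite negb_imply negbK => Hi; exists i.
  pose g (j : 'I_p) := odflt j0 [pick i | (i \in A) && (w i ^+ N' == om ^+ j)].
  have gP (j : 'I_p) : (g j \in A) && (w (g j) ^+ N' == om ^+ j).
    rewrite /g; case: pickP => [//|H]; have [i Hi] := Hj j.
    by rewrite H in Hi.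
  have ginj : injective g.
    move=> j1 j2 e; apply: val_inj => /=.
    move: (gP j1) (gP j2); rewrite e => /andP[_ /eqP ->] /andP[_ /eqP].
    move/eqP; rewrite (eq_prim_root_expr prim_om) !modn_small //.
    by move/eqP.
  have : (#|[set g x | x : 'I_p]| <= #|A|)%N.
    by apply: subset_leq_card; apply/subsetP => x /imsetP[j _ ->]; have /andP[] := gP j.
  by rewrite card_imset // card_ord leqNgt cardA.
have vnz : v != 0.
  apply/eqP => v0; move: vp; rewrite v0 expr0n (gtn_eqF p_gt0) => /eqP.
  by rewrite eq_sym oner_eq0.
have Ebad r0 : (r0 < p)%N -> ~~ coprime (1 + N' * r0) p -> E r0 = 0.
  move=> r0p bad.
  have H0 : \sum_(r < p) (v ^+ (p.-1)) ^+ r * E r = 0.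
    rewrite /E; under eq_bigr do rewrite mulr_sumr.
    rewrite exchange_big /= big1 // => i iA.
    have -> : \sum_(r < p) (v ^+ p.-1) ^+ r * (ratr (c i) * (w i * (w i ^+ N') ^+ r))
       = ratr (c i) * w i * \sum_(r < p) (w i ^+ N' * v ^+ p.-1) ^+ r.
      rewrite mulr_sumr; apply: eq_bigr => r _; rewrite exprMn; ring.
    rewrite geom_root; last first.
      by rewrite exprMn -!exprM [(N' * p)%N]mulnC wN // [(p.-1 * p)%N]mulnC exprM vp expr1n mulr1.
    case: ifP => [/eqP H|_]; last by rewrite mulr0.
    have : w i ^+ N' = v.
      have vS : v ^+ p = v ^+ p.-1 * v by rewrite -exprSr prednK.
      by rewrite -[LHS]mulr1 -vp vS mulrA H mul1r.
    by move/eqP; rewrite (negbTE (vA i iA)).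
  move: H0; rewrite (bigD1 (Ordinal r0p)) //= big1 ?addr0.
    by move/eqP; rewrite mulf_eq0 !expf_eq0 (negbTE vnz) !andbF /= => /eqP.
  move=> r /eqP nr; case: (boolP (coprime (1 + N' * r) p)) => [co|bad'].
    by rewrite Egal ?mulr0.
  by case: nr; apply: val_inj; apply: (uniq_bad pp coN bad' bad).
move=> r rp; case: (boolP (coprime (1 + N' * r) p)) => [co|bad].
  exact: Egal.
exact: Ebad.
Qed.

End Mann.

Lemma prime_dvd_C k p : prime p -> (p <= 2 * k)%N -> (p %| Cconst k)%N.
Proof.
move=> pp hp; have hp' : (p < (2 * k).+1)%N by [].
by rewrite /Cconst (bigD1 (Ordinal hp')) //= dvdn_mulr.
Qed.

Lemma NT k N : (0 < N)%N -> (N %| Cconst k)%N \/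
  exists p N', [/\ prime p, N = (p * N')%N & (p %| N')%N \/ (2 * k < p)%N].
Proof.
elim/ltn_ind: N => N IH N_gt0.
case: (leqP N 1) => [N1|N_gt1].
  by left; have -> : N = 1%N by lia.
set p := pdiv N; have pp : prime p := pdiv_prime N_gt1.
set N' := (N %/ p)%N.
have DN : N = (p * N')%N by rewrite mulnC divnK // pdiv_dvd.
case: (boolP (p %| N')%N) => [d|nd].
  by right; exists p, N'; split => //; left.
case: (leqP p (2 * k)) => [pk|pk]; last by right; exists p, N'; split => //; right.
have p_gt1 := prime_gt1 pp.
have N'_gt0 : (0 < N')%N by move: N_gt0; rewrite DN muln_gt0 => /andP[].
have N'_lt : (N' < N)%N by rewrite DN -[X in (X < _)%N]mul1n ltn_pmul2r.
case: (IH N' N'_lt N'_gt0) => [dC|[q [M [qp DN' H]]]].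
  left; rewrite DN Gauss_dvd ?dC ?prime_dvd_C //.
  by rewrite prime_coprime.
right; exists q, (p * M)%N; split => //.
  by rewrite DN DN' mulnCA.
by case: H => [h|h]; [left; rewrite dvdn_mull | right].
Qed.

Lemma mann (C : numClosedFieldType) (I : finType) (c : I -> rat) (w : I -> C)
  k (A : {set I}) j0 N :
  minimal c w A -> j0 \in A -> w j0 = 1 -> (0 < N)%N ->
  (forall i, i \in A -> w i ^+ N = 1) -> (#|A| <= 2 * k)%N ->
  forall i, i \in A -> w i ^+ Cconst k = 1.
Proof.
move=> minA j0A wj0; elim/ltn_ind: N => N IH N_gt0 wN cA.
case: (NT k N_gt0) => [/dvdnP[m ->]|[p [N' [pp DN H]]]].
  by move=> i iA; rewrite mulnC exprM wN // expr1n.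
have N'_gt0 : (0 < N')%N by move: N_gt0; rewrite DN muln_gt0 => /andP[].
have N'_lt : (N' < N)%N by rewrite DN -[X in (X < _)%N]mul1n ltn_pmul2r ?prime_gt1.
apply: (IH N' N'_lt N'_gt0) => //.
apply: (reduce minA j0A wj0 pp N'_gt0); first by rewrite -DN.
by case: H => [h|h]; [left | right; apply: leq_ltn_trans cA h].
Qed.

Lemma exists_minimal (C : numClosedFieldType) (I : finType) (c : I -> rat) (z : I -> C) x :
  S c z setT = 0 -> exists A, minimal c z A /\ x \in A.
Proof.
move=> ST.
pose P (A : {set I}) := (x \in A) && (S c z A == 0).
have PT : P setT by rewrite /P in_setT ST eqxx.
case: (arg_minnP (fun A : {set I} => #|A|) PT) => A /andP[xA /eqP SA] Amin.
exists A; split => //; split => // B BA Bn0 SB.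
have SAB : S c z (A :\: B) = 0.
  move: SA; rewrite /S (big_setID B) /= (setIidPr BA).
  by rewrite -/(S c z B) SB add0r.
case: (boolP (x \in B)) => xB.
  have := Amin B; rewrite /P xB SB eqxx => /(_ isT) cAB.
  apply/eqP; rewrite eqEsubset BA /=.
  by rewrite -(subset_leqif_card BA) eqn_leq cAB subset_leq_card.
have := Amin (A :\: B); rewrite /P inE xB xA SAB eqxx => /(_ isT) cAB.
have sub : A :\: B \subset A by apply: subsetDl.
have : A \subset A :\: B by rewrite -(subset_leqif_card sub) eqn_leq cAB subset_leq_card.
case/set0Pn: Bn0 => y yB => /subsetP /(_ y (subsetP BA y yB)).
by rewrite inE yB.
Qed.

Lemma scale_minimal (C : numClosedFieldType) (I : finType) (c : I -> rat) (z : I -> C) A (u : C) :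
  u != 0 -> minimal c z A -> minimal c (fun x => z x / u) A.
Proof.
move=> u0 [SA minA].
have e B : S c (fun x => z x / u) B = S c z B / u.
  by rewrite /S mulr_suml; apply: eq_bigr => i _; rewrite mulrA.
split; first by rewrite e SA mul0r.
move=> B BA Bn0; rewrite e => /eqP; rewrite mulf_eq0 invr_eq0 (negbTE u0) orbF.
by move/eqP; apply: minA.
Qed.

Lemma common_order (C : numClosedFieldType) (s : seq C) :
  (forall y, y \in s -> is_root_of_unity y) ->
  exists2 N, (0 < N)%N & forall y, y \in s -> y ^+ N = 1.
Proof.
elim: s => [|y s IH] H; first by exists 1%N.
have [n [n0 yn]] := H y (mem_head _ _).
have [N N0 HN] := IH (fun t ts => H t (mem_behead (s := y :: s) ts)).
exists (n * N)%N; first by rewrite muln_gt0 n0.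
move=> t; rewrite inE => /orP[/eqP ->|ts]; first by rewrite exprM yn expr1n.
by rewrite mulnC exprM HN // expr1n.
Qed.

Lemma rou_neq0 (C : numClosedFieldType) (y : C) : is_root_of_unity y -> y != 0.
Proof.
case=> n [n0 yn]; apply/eqP => y0; move: yn; rewrite y0 expr0n (gtn_eqF n0) => /eqP.
by rewrite eq_sym oner_eq0.
Qed.

Lemma pair_ratio (C : numClosedFieldType) k (a : C) (zeta xi : k.-tuple C) :
  inZ a zeta -> inZ a xi -> forall i, exists j, (tnth zeta i / tnth xi j) ^+ Cconst k = 1.
Proof.
move=> [rz [c' [sz nz]]] [rx [b [sx nx]]] i.
pose d (x : 'I_k + 'I_k) : rat := match x with inl i => c' i | inr j => - b j end.
pose z (x : 'I_k + 'I_k) : C := match x with inl i => tnth zeta i | inr j => tnth xi j end.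
have split B : S d z B = \sum_(i in [set i | inl i \in B]) ratr (c' i) * tnth zeta i
   - \sum_(j in [set j | inr j \in B]) ratr (b j) * tnth xi j.
  rewrite /S big_sumType /= -sumrN; congr (_ + _).
    by apply: eq_bigl => i'; rewrite inE.
  apply: eq_big => [j|j _]; first by rewrite inE.
  by rewrite rmorphN mulNr.
have ST : S d z setT = 0.
  have e1 : \sum_(i in [set i | inl i \in [set: 'I_k + 'I_k]]) ratr (c' i) * tnth zeta i = a.
    by rewrite -sz; apply: eq_bigl => x; rewrite !inE.
  have e2 : \sum_(i in [set i | inr i \in [set: 'I_k + 'I_k]]) ratr (b i) * tnth xi i = a.
    by rewrite -sx; apply: eq_bigl => x; rewrite !inE.
  by rewrite split e1 e2 subrr.
have [A [minA iA]] := exists_minimal (inl i) ST.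
have [j jA] : exists j, inr j \in A.
  case: (boolP [exists j, inr j \in A]) => [/existsP//|].
  rewrite negb_exists => /forallP nA.
  have : [set i' | inl i' \in A] != set0 by apply/set0Pn; exists i; rewrite inE.
  move/nz; case: minA => SA _; move: SA; rewrite split.
  have -> : [set j | inr j \in A] = set0.
    by apply/setP => j; rewrite !inE (negbTE (nA j)).
  by rewrite big_set0 subr0 => ->; rewrite eqxx.
have xj0 : tnth xi j != 0 by apply: rou_neq0.
have minW := scale_minimal xj0 minA.
have rou : forall y, y \in [seq z x | x <- enum {: 'I_k + 'I_k}] -> is_root_of_unity y.
  by move=> y /mapP[[i'|j'] _ ->] /=; [exact: rz | exact: rx].
have [N0 N0_gt0 HN0] := common_order rou.
  exists j.
  have := mann (j0 := inr j) (k := k) minW jA _ N0_gt0 _ _ iA; apply.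
  - by rewrite /= divff.
  - move=> x _; rewrite expr_div_n !HN0 ?divr1 //.
    all: first [change (z (inr j) \in [seq z x0 | x0 <- enum {: 'I_k + 'I_k}]) | idtac].
    by apply/mapP; exists (inr j); rewrite ?mem_enum.
    by apply/mapP; exists x; rewrite ?mem_enum.
  - by apply: leq_trans (max_card _) _; rewrite card_sum !card_ord; lia.
Qed.

Unset Implicit Arguments.
Set Strict Implicit.
Set Printing Implicit Defensive.

Theorem corollary7 (C : numClosedFieldType) (k : nat) (a : C)
  (hk : (1 <= k)%N) (ha : a != 0) :
  forall s : seq (k.-tuple C), uniq s -> (forall z, z \in s -> inZ a z) ->
    (size s <= (k * Cconst k) ^ k)%N.
Proof.
case=> [//|xi s'] us Hs.
set s := xi :: s' in us Hs *.
have Hxi := Hs xi (mem_head _ _).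
set Ck := Cconst k.
have Ck_gt0 : (0 < Ck)%N by apply: prodn_cond_gt0 => p /prime_gt0.
have [rho prim] := prim_root_exists C Ck_gt0.
have d0 : ('I_k * 'I_Ck)%type := (Ordinal hk, Ordinal Ck_gt0).
pose g (zeta : k.-tuple C) : {ffun 'I_k -> 'I_k * 'I_Ck} :=
  [ffun i => odflt d0 [pick jm : 'I_k * 'I_Ck | tnth zeta i == tnth xi jm.1 * rho ^+ jm.2]].
have gP zeta : zeta \in s -> forall i, tnth zeta i = tnth xi (g zeta i).1 * rho ^+ (g zeta i).2.
  move=> zs i; rewrite /g ffunE; case: pickP => [jm /eqP //|H].
  have [j Hj] := pair_ratio (Hs zeta zs) Hxi i.
  have [m Dm] := prim_rootP prim Hj.
  have xj0 : tnth xi j != 0 by apply: rou_neq0; case: Hxi.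
  have := H (j, m); rewrite /= -Dm mulrC divfK // eqxx //.
have ginj : {in s &, injective g}.
  move=> z1 z2 z1s z2s e; apply: eq_from_tnth => i.
  by rewrite (gP _ z1s) (gP _ z2s) e.
rewrite -(size_map g) -(card_uniqP _); last by rewrite map_inj_in_uniq.
by apply: leq_trans (max_card _) _; rewrite card_ffun card_prod !card_ord.
Qed.
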